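(* Let $G$ be a connected graph on $n$ vertices. Then $b(G^2)\le \lceil \sqrt{n}\,\rceil$.
   Context: $G^2$ is the graph on $V(G)$ in which distinct $u,v$ are adjacent iff $d_G(u,v)\le 2$. Graph burning: in each round $i$ a vertex (source) is chosen and burned, and simultaneously every unburned neighbour of a vertex burned by the end of round $i-1$ becomes burned; burned vertices stay burned. The burning number $b(G)$ is the minimum number of rounds needed to burn all vertices. *)

(* Defs.v *)
From mathcomp Require Import all_boot.
Set Implicit Arguments. Unset Strict Implicit. Unset Printing Implicit Defensive.

Definition simple_graph (T : finType) (e : rel T) : Prop :=
  symmetric e /\ irreflexive e.

Definition connected_graph (T : finType) (e : rel T) : Prop :=
  forall u v : T, connect e u v.

Definition sq_graph (T : finType) (e : rel T) : rel T :=
  fun u v => (u != v) && (e u v || [exists w, e u w && e w v]).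

Definition burn_step (T : finType) (e : rel T) (B : {set T}) (x : T) : {set T} :=
  x |: (B :|: [set v | [exists u in B, e u v]]).

Definition burned (T : finType) (e : rel T) (s : seq T) : {set T} :=
  foldl (burn_step e) set0 s.

Definition burns (T : finType) (e : rel T) (s : seq T) : bool :=
  burned e s == [set: T].

Lemma burned_sub (T : finType) (e : rel T) (s : seq T) (B : {set T}) :
  B \subset foldl (burn_step e) B s /\
  {subset s <= foldl (burn_step e) B s}.
Proof.
elim: s B => [|x s IH] B /=; first by split=> //.
have [H1 H2] := IH (burn_step e B x).
split.
  apply: subset_trans H1; rewrite /burn_step.
  by apply/subsetP=> y yB; rewrite !inE yB orbT.
move=> y; rewrite inE => /orP [/eqP -> | ys]; last exact: H2.
by apply: (subsetP H1); rewrite /burn_step !inE eqxx.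
Qed.

Lemma burns_exists (T : finType) (e : rel T) :
  exists k, [exists t : k.-tuple T, burns e t].
Proof.
exists (size (enum T)); apply/existsP; exists (in_tuple (enum T)).
rewrite /burns /burned /=; apply/eqP/setP=> x; rewrite inE.
by have [_ H] := burned_sub e (enum T) set0; apply: H; rewrite mem_enum.
Qed.

Definition burning_number (T : finType) (e : rel T) : nat :=
  ex_minn (burns_exists e).

Lemma ceil_sqrt_exists (n : nat) : exists k, n <= k * k.
Proof. by exists n; case: n => // n; rewrite leq_pmulr. Qed.

Definition ceil_sqrt (n : nat) : nat := ex_minn (ceil_sqrt_exists n).

(* Main.v *)
Require Import Defs.
From mathcomp Require Import all_boot zify.
Set Implicit Arguments. Unset Strict Implicit. Unset Printing Implicit Defensive.

Lemma burn_path (T : finType) (e : rel T) : irreflexive e ->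
  forall (s : seq T) (B : {set T}) b q, b \in B -> path e b q ->
  size q <= 2 * size s -> last b q \in foldl (burn_step (sq_graph e)) B s.
Proof.
move=> irr; elim=> [|x s IH] B b q bB pq sq /=.
  by case: q pq sq => [|//] _ _.
have sub : B \subset burn_step (sq_graph e) B x.
  by apply/subsetP=> y yB; rewrite /burn_step !inE yB orbT.
case: q pq sq => [|a [|a2 q]] /=.
- move=> _ _; have [H _] := burned_sub (sq_graph e) s (burn_step (sq_graph e) B x).
  by apply: (subsetP H); apply: (subsetP sub).
- rewrite andbT => eba _.
  apply: (IH _ a [::]) => //.
  rewrite /burn_step !inE; apply/orP; right; apply/orP; right.
  apply/existsP; exists b; rewrite bB /sq_graph eba /=.
  by rewrite ?andbT; apply: contraTneq eba => ->; rewrite irr.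
- move=> /and3P [eba eaa2 pq] sq.
  have [E|NE] := eqVneq b a2.
    rewrite -E; apply: (IH _ b q) => //; first by apply: (subsetP sub).
      by rewrite E.
    by move: sq; rewrite mulnS; lia.
  apply: (IH _ a2 q) => //; last by move: sq; rewrite mulnS; lia.
  rewrite /burn_step !inE; apply/orP; right; apply/orP; right.
  apply/existsP; exists b; rewrite bB /sq_graph NE /=.
  by apply/orP; right; apply/existsP; exists a; rewrite eba eaa2.
Qed.

Definition relS (T : finType) (e : rel T) (S : {set T}) : rel T :=
  [rel a b | [&& a \in S, b \in S & e a b]].
Definition conn (T : finType) (e : rel T) (S : {set T}) : Prop :=
  forall a b, a \in S -> b \in S -> connect (relS e S) a b.

Lemma piece (T : finType) (e : rel T) : simple_graph e ->
  forall (S : {set T}) m r, conn e S -> r \in S -> 0 < m ->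
  exists v, exists D : {set T}, [/\ D \subset S, minn m #|S| <= #|D|,
    conn e (S :\: D) &
    forall w, w \in D -> exists q, [/\ path e v q, last v q = w & size q < m]].
Proof.
move=> [esym eirr] S m r cS rS m0.
pose step (B : {set T}) := B :|: [set w in S | [exists u in B, e u w]].
pose ball n := iter n step [set r].
have ballS : forall n, ball n \subset S.
  elim=> [|n IH] /=; first by rewrite sub1set.
  rewrite /step subUset IH /=; apply/subsetP => x; rewrite inE => /andP[] //.
have inball : forall q, path (relS e S) r q -> exists n, last r q \in ball n.
  elim/last_ind => [|q y IH]; first by exists 0; rewrite /= inE.
  rewrite rcons_path => /andP [pq /= /and3P [_ yS ey]].
  have [n Hn] := IH pq; exists n.+1; rewrite last_rcons /= /step !inE yS /=.
  by apply/orP; right; apply/existsP; exists (last r q); rewrite Hn.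
have Hex : forall w, exists n, (w \in ball n) || (w \notin S).
  move=> w; case: (boolP (w \in S)) => wS; last by exists 0; rewrite orbT.
  have /connectP [q pq ->] := cS r w rS wS.
  by have [n Hn] := inball q pq; exists n; rewrite Hn.
pose d w := ex_minn (Hex w).
have dP : forall w, w \in S -> w \in ball (d w).
  by move=> w wS; rewrite /d; case: ex_minnP => n; rewrite wS orbF.
have dmin : forall w n, w \in ball n -> d w <= n.
  by move=> w n wn; rewrite /d; case: ex_minnP => k _; apply; rewrite wn.
have dr : d r = 0 by apply/eqP; rewrite -leqn0; apply: dmin; rewrite /= inE.
have dpar : forall w, w \in S -> w != r -> exists u, [&& u \in S, e u w & d u < d w].
  move=> w wS wr; have := dP w wS; case Ed : (d w) => [|n].
    by rewrite /= inE (negbTE wr).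
  rewrite /= /step inE => /orP [wn|].
    by have := dmin _ _ wn; rewrite Ed ltnn.
  rewrite inE => /andP [_ /existsP [u /andP [un eu]]].
  exists u; rewrite eu (subsetP (ballS n)) //=.
  by have := dmin _ _ un; lia.
pose p w := odflt w [pick u | [&& u \in S, e u w & d u < d w]].
have pS : forall w, w \in S -> p w \in S.
  by move=> w wS; rewrite /p; case: pickP => [u /and3P []|].
have pr : p r = r.
  by rewrite /p; case: pickP => [u /and3P [_ _]|//]; rewrite dr.
have pe : forall w, w \in S -> w != r -> e (p w) w /\ d (p w) < d w.
  move=> w wS wr; rewrite /p; case: pickP => [u /and3P [_ -> ->]//|H].
  by have [u /and3P [a b c]] := dpar w wS wr; have := H u; rewrite a b c.
pose sub v := [set w in S | fconnect p w v].
have toR : forall w, w \in S -> fconnect p w r.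
  move=> w; have [n] := ubnP (d w); elim: n w => // n IH w /ltnSE dw wS.
  have [->|wr] := eqVneq w r; first exact: connect0.
  apply: connect_trans (fconnect1 p w) (IH _ _ (pS w wS)).
  by have [_ H] := pe w wS wr; lia.
have subr : sub r = S.
  by apply/setP => w; rewrite inE; case: (boolP (w \in S)) => //= wS; rewrite toR.
pose m' := minn m #|S|.
have Pr : (r \in S) && (m' <= #|sub r|) by rewrite rS subr geq_minr.
have [v /andP [vS vm] vmax] := @arg_maxnP _ r (fun v => (v \in S) && (m' <= #|sub v|)) d Pr.
have iterS' : forall w i, w \in S -> iter i p w \in S.
  by move=> w; elim=> [//|i IH] wS; rewrite iterS pS // IH.
have fromr : forall x, fconnect p r x -> x = r.
  by move=> x /iter_findex <-; rewrite iter_fix.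
exists v, (sub v); split => //.
- by apply/subsetP => w; rewrite inE => /andP [].
- have [vr|vr] := eqVneq v r.
    move=> a b; rewrite vr subr setDv inE //.
  have toR' : forall a, a \in S :\: sub v -> connect (relS e (S :\: sub v)) a r.
    move=> a; have [n] := ubnP (d a); elim: n a => // n IH a /ltnSE da aS'.
    have [->|ar] := eqVneq a r; first exact: connect0.
    have aS : a \in S by move: aS'; rewrite inE => /andP [].
    have [epa dpa] := pe a aS ar.
    have paS' : p a \in S :\: sub v.
      rewrite !inE pS // andbT; apply/negP => pv.
      move: aS'; rewrite !inE aS andbT => /negP; apply.
      exact: connect_trans (fconnect1 p a) pv.
    apply: connect_trans (connect1 _) (IH _ _ paS'); last by lia.
    by rewrite /relS /= aS' paS' esym.
  have symS : connect_sym (relS e (S :\: sub v)).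
    by apply: sym_connect_sym => a b; rewrite /relS /= esym andbCA.
  move=> a b aS bS; apply: connect_trans (toR' a aS) _.
  by rewrite symS; apply: toR'.
move=> w; rewrite inE => /andP [wS fc].
pose j := findex p w v.
have ij : iter j p w = v by apply: iter_findex.
have jo : j < order p w by apply: findex_max.
have notr : forall i, i < j -> iter i p w != r.
  move=> i ij' ; apply/eqP => Er.
  have vr : v = r by rewrite -ij -(subnK (ltnW ij')) iterD Er iter_fix.
  have := findex_iter (ltn_trans ij' jo); rewrite Er -vr -/j => E.
  by move: ij'; rewrite E ltnn.
have pth : forall i, i <= j -> exists q, [/\ path e (iter i p w) q,
    last (iter i p w) q = w & size q = i].
  elim=> [|i IH] ij'; first by exists [::].
  have [q [pq lq sq]] := IH (ltnW ij').
  exists (iter i p w :: q); rewrite /= pq lq sq ?andbT; split => //.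
  by have [] := pe _ (iterS' w i wS) (notr i ij').
have [q [pq lq sq]] := pth j (leqnn j).
exists q; rewrite ij in pq lq; split => //; rewrite sq.
case Ej : j => [//|j'].
pose c := iter j' p w.
have cS' : c \in S by apply: iterS'.
have cr : c != r by apply: notr; rewrite Ej.
have pc : p c = v by rewrite /c -iterS -Ej.
have dvc : d v < d c by rewrite -pc; have [] := pe c cS' cr.
have nPc : ~~ ((c \in S) && (m' <= #|sub c|)).
  by apply/negP => Pc; have := vmax c Pc; lia.
move: nPc; rewrite cS' /= -ltnNge => lt.
suff : j'.+1 <= #|sub c| by rewrite /m' in lt; lia.
have -> : j'.+1 = #|[set iter (nat_of_ord i) p w | i : 'I_j'.+1]|.
  rewrite card_imset ?card_ord // => i1 i2 E.
  have o1 : (i1 : nat) < order p w by have := ltn_ord i1; move: jo; rewrite Ej; lia.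
  have o2 : (i2 : nat) < order p w by have := ltn_ord i2; move: jo; rewrite Ej; lia.
  apply: val_inj; rewrite /= -(findex_iter o1) -(findex_iter o2).
  by rewrite /= in E; rewrite E.
apply: subset_leq_card; apply/subsetP => x /imsetP [i _ ->]; rewrite inE iterS' //=.
have : c = iter (j' - i) p (iter i p w) by rewrite -iterD subnK // -ltnS.
by move=> ->; apply: fconnect_iter.
Qed.

Lemma claim (T : finType) (e : rel T) (x0 : T) : simple_graph e -> forall k S,
  conn e S -> #|S| <= k * k -> exists s : seq T, size s = k /\
  forall u, u \in S -> exists2 i, i < k & exists q,
   [/\ path e (nth x0 s i) q, last (nth x0 s i) q = u & size q <= 2*(k-1-i)].
Proof.
move=> sg; elim=> [|k IH] S cS HS.
  exists [::]; split => // u uS.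
  have H0 : 0 < #|S| by apply/card_gt0P; exists u.
  by move: HS H0; lia.
case: (set_0Vmem S) => [S0|[r rS]].
  by exists (nseq k.+1 x0); split; [rewrite size_nseq | move=> u; rewrite S0 inE].
have [v [D [DS Dm cD HD]]] := piece sg (m:=k.*2.+1) cS rS (ltn0Sn _).
have HS' : #|S :\: D| <= k * k.
  by rewrite cardsD (setIidPr DS); move: Dm HS; rewrite -addnn; lia.
have [s [ss Hs]] := IH _ cD HS'.
exists (v :: s); split; first by rewrite /= ss.
move=> u uS; case: (boolP (u \in D)) => uD.
  exists 0 => //; have [q [pq lq sq]] := HD u uD.
  by exists q; split => //; move: sq; rewrite -addnn; lia.
have uS' : u \in S :\: D by rewrite inE uD uS.
have [i ik [q [pq lq sq]]] := Hs u uS'.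
exists i.+1 => //; exists q; split => //; move: sq; lia.
Qed.
Theorem mainTheorem7 (T : finType) (e : rel T) :
  simple_graph e -> connected_graph e ->
  burning_number (sq_graph e) <= ceil_sqrt #|T|.
Proof.
move=> sg cg.
rewrite /ceil_sqrt; case: ex_minnP => k Hk Hmin.
rewrite /burning_number; case: ex_minnP => b _ Hb.
apply: Hb.
case: (pickP T) => [x0 _|T0].
  have cS : conn e [set: T].
    move=> a c _ _; have /connectP [p pp ->] := cg a c.
    apply/connectP; exists p => //.
    elim: p a pp {c} => [//|y p IH] a /= /andP [eay pp].
    by rewrite /relS /= !inE eay /= IH.
  have Hk' : #|[set: T]| <= k*k by rewrite cardsT.
  have [s [ss Hs]] := claim x0 sg cS Hk'.
  apply/existsP; exists (Tuple (introT eqP ss)).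
  rewrite /burns /burned /=; apply/eqP/setP => u; rewrite inE.
  have [i ik [q [pq lq sq]]] := Hs u (in_setT u).
  rewrite -(cat_take_drop i.+1 s) foldl_cat -lq.
  apply: burn_path => //; first by case: sg.
    have [_ H] := burned_sub (sq_graph e) (take i.+1 s) set0.
    apply: H; rewrite -(nth_take x0 (ltnSn i)); apply: mem_nth.
    by rewrite size_take ss; case: ifP.
  by rewrite size_drop ss; move: sq; lia.
have k0 : k = 0.
  by apply/eqP; rewrite -leqn0; apply: Hmin; rewrite (eq_card0 T0).
subst k; apply/existsP; exists [tuple]; rewrite /burns /burned /=.
by apply/eqP/setP => u; have := T0 u.
Qed.
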